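(* Let $q>r\geq 1$ and $N\geq 1$ be integers. Then: (1) $f_{q,r}(N)\geq f_{q-t,r-t}(N)$ and $g_{q,r}(N)\geq g_{q-t,r-t}(N)$ for all integers $0\leq t<r$; (2) $f_{q,r}(N)\geq f_{q/d,r/d}(N)$ and $g_{q,r}(N)\geq g_{q/d,r/d}(N)$ for every positive integer $d$ dividing $\gcd(q,r)$; (3) if $p=\lfloor \frac{q}{q-r}\rfloor\geq 2$, then $f_{q,r}(N)\geq f_{p,p-1}(N)$ and $g_{q,r}(N)\geq g_{p,p-1}(N)$.
   Context: Colors are from $[q]$; path length means number of vertices. For a $q$-edge-colored complete graph $K$ on $[N]$ with its natural order, $f_{q,r}(K)$ is the maximum length of a monotone path (vertices strictly increasing) in $K$ using at most $r$ colors, and $f_{q,r}(N)$ is the minimum of $f_{q,r}(K)$ over all such $K$ on $N$ vertices. For a $q$-edge-colored tournament $T$ (orientation of a complete graph), $g_{q,r}(T)$ is the maximum length of a directed path in $T$ whose edges receive at most $r$ colors, and $g_{q,r}(N)$ is the minimum of $g_{q,r}(T)$ over all $q$-edge-colored $N$-vertex tournaments $T$. *)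

(* Defs.v *)
From mathcomp Require Import all_boot.
Set Implicit Arguments. Unset Strict Implicit. Unset Printing Implicit Defensive.

(* A q-edge-colouring is a function on
   ordered pairs of vertices with values in 'I_q (colours [q]); for the
   complete graph only the values on pairs (i,j) with i < j are used, for a
   tournament only the values on arcs (i,j) with T (i,j) are used. *)

Definition coloring (N q : nat) := {ffun 'I_N * 'I_N -> 'I_q}.

Definition path_colors (N q : nat) (c : coloring N q) (s : seq 'I_N) : {set 'I_q} :=
  [set c p | p in zip s (behead s)].

Definition good_monotone (N q r : nat) (c : coloring N q) (s : seq 'I_N) : bool :=
  sorted (fun x y : 'I_N => x < y) s && (#|path_colors c s| <= r).

Definition fK (N q r : nat) (c : coloring N q) : nat :=
  \max_(n < N.+1 | [exists s : n.-tuple 'I_N, good_monotone r c s]) n.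

Definition f (q r N : nat) : nat :=
  \big[minn/N]_(c : coloring N q) fK r c.

(* tournaments on 'I_N: T (i,j) means arc i -> j *)
Definition is_tournament (N : nat) (T : {ffun 'I_N * 'I_N -> bool}) : bool :=
  [forall i, [forall j, if i == j then ~~ T (i, j)
                        else (T (i, j) != T (j, i))]].

Definition good_directed (N q r : nat) (T : {ffun 'I_N * 'I_N -> bool})
    (c : coloring N q) (s : seq 'I_N) : bool :=
  [&& uniq s, all (fun p => T p) (zip s (behead s)) & (#|path_colors c s| <= r)].

Definition gT (N q r : nat) (T : {ffun 'I_N * 'I_N -> bool}) (c : coloring N q) : nat :=
  \max_(n < N.+1 | [exists s : n.-tuple 'I_N, good_directed r T c s]) n.

Definition g (q r N : nat) : nat :=
  \big[minn/N]_(T : {ffun 'I_N * 'I_N -> bool} | is_tournament T)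
     \big[minn/N]_(c : coloring N q) gT r T c.

(* Main.v *)
Require Import Defs.
From mathcomp Require Import all_boot zify.

Lemma bigmin_le (I : finType) (P : pred I) (F : I -> nat) (N : nat) (i : I) :
  P i -> \big[minn/N]_(j | P j) F j <= F i.
Proof.
move=> Pi; rewrite -big_filter.
have : i \in [seq j <- index_enum I | P j] by rewrite mem_filter Pi mem_index_enum.
elim: [seq j <- index_enum I | P j] => // a s IH; rewrite inE big_cons.
case/orP=> [/eqP<-|/IH]; first exact: geq_minl.
by move=> h; rewrite geq_min h orbT.
Qed.

Lemma le_bigmin (I : finType) (P : pred I) (F : I -> nat) (N m : nat) :
  m <= N -> (forall i, P i -> m <= F i) -> m <= \big[minn/N]_(j | P j) F j.
Proof.
move=> mN H; apply: (big_ind (fun y => m <= y)) => //.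
by move=> x y a b; rewrite leq_min a b.
Qed.

Lemma f_leN q r N : f q r N <= N.
Proof. by apply: (big_ind (fun y => y <= N)) => // [x y a b|c _]; rewrite ?geq_min ?a //;
  rewrite /fK; apply/bigmax_leqP => i _; rewrite -ltnS. Qed.

Lemma g_leN q r N : g q r N <= N.
Proof. by apply: (big_ind (fun y => y <= N)) => // [x y a b|c _]; rewrite ?geq_min ?a //;
  apply: (big_ind (fun y => y <= N)) => // [x y a b|c' _]; rewrite ?geq_min ?a //;
  rewrite /gT; apply/bigmax_leqP => i _; rewrite -ltnS. Qed.

Section Red.
Variables (N q q' r r' : nat) (phi : 'I_q -> 'I_q').
Hypothesis Hphi : forall S : {set 'I_q'}, #|S| <= r' -> #|phi @^-1: S| <= r.

Definition cc (c : coloring N q) : coloring N q' := [ffun p => phi (c p)].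

Lemma pc_cc c s : path_colors (cc c) s = phi @: path_colors c s.
Proof.
rewrite /path_colors -imset_comp; apply: eq_imset => p /=; by rewrite ffunE.
Qed.

Lemma card_pc c s : #|path_colors (cc c) s| <= r' -> #|path_colors c s| <= r.
Proof.
rewrite pc_cc => H; apply: leq_trans (Hphi _ H); apply: subset_leq_card; apply/subsetP => x hx; rewrite inE; exact: imset_f.

Qed.

Lemma fK_cc c : fK r' (cc c) <= fK r c.
Proof.
apply/bigmax_leqP => n /existsP [s /andP [Hs Hc]].
apply: leq_bigmax_cond; apply/existsP; exists s; rewrite /good_monotone Hs.
exact: card_pc.
Qed.

Lemma gT_cc T c : gT r' T (cc c) <= gT r T c.
Proof.
apply/bigmax_leqP => n /existsP [s /and3P [H1 H2 Hc]].
apply: leq_bigmax_cond; apply/existsP; exists s; rewrite /good_directed H1 H2.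
exact: card_pc.
Qed.

Lemma f_red : f q' r' N <= f q r N.
Proof.
apply: le_bigmin; first exact: f_leN.
move=> c _; apply: leq_trans (fK_cc c); exact: bigmin_le.
Qed.

Lemma g_red : g q' r' N <= g q r N.
Proof.
apply: le_bigmin; first exact: g_leN.
move=> T HT; apply: le_bigmin; first exact: g_leN.
move=> c _; apply: (leq_trans _ (gT_cc T c)); rewrite /g.
have := @bigmin_le _ (@is_tournament N) (fun T => \big[minn/N]_(c0 : coloring N q') gT r' T c0) N T HT => H; eapply leq_trans; [exact H|]; exact: bigmin_le.
Qed.
End Red.

Lemma card_interval q (A : {pred 'I_q}) lo hi :
  (forall i, i \in A -> lo <= i < hi) -> #|A| <= hi - lo.
Proof.
move=> H; rewrite -(size_iota lo (hi - lo)) cardE -(size_map val).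
apply: uniq_leq_size; first by rewrite map_inj_uniq ?enum_uniq //; exact: val_inj.
move=> x /mapP [i]; rewrite mem_enum => /H hi' ->; rewrite mem_iota; case/andP: hi' => h1 h2; rewrite h1 subnKC //; exact: leq_trans h1 (ltnW h2).
Qed.

Lemma preim_bound q q' r r' (phi : 'I_q -> 'I_q') a b (c : nat) :
 (forall j : 'I_q', #|[set i | phi i == j]| <= a + b * (j == c :> nat)) ->
 r' * a + b <= r ->
 forall S : {set 'I_q'}, #|S| <= r' -> #|phi @^-1: S| <= r.
Proof.
move=> Hf Hr S HS.
rewrite -sum1_card (partition_big phi (mem S)); last by move=> i; rewrite inE.
apply: leq_trans (_ : \sum_(j in S) (a + b * (j == c :> nat)) <= r).
  apply: leq_sum => j jS; apply: leq_trans (Hf j).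
  rewrite sum1_card; apply: subset_leq_card; apply/subsetP => i.
  by rewrite !inE => /andP [].
rewrite big_split /= sum_nat_const -big_distrr /=.
have H1 : \sum_(j in S) (j == c :> nat) <= 1.
  rewrite (eq_bigr (fun j : 'I_q' => if val j == c then 1 else 0)); last first.
    by move=> j _; case: (val j == c).
  rewrite -big_mkcondr sum1_card.
  apply: leq_trans (@card_interval _ _ c c.+1 _) _; last by rewrite subSnn.
  by move=> i; rewrite unfold_in /= => /andP [_ /eqP ->]; rewrite leqnn ltnSn.
have : #|S| * a <= r' * a by rewrite leq_mul2r HS orbT.
have : b * \sum_(j in S) (j == c :> nat) <= b by rewrite -{2}(muln1 b) leq_mul2l H1 orbT.
move=> X Y; exact: leq_trans (leq_add Y X) Hr.
Qed.

Lemma c1_lt t q (i : 'I_q) : t < q -> i - t < q - t.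
Proof. have := ltn_ord i; lia. Qed.
Definition phi1 t q (H : t < q) (i : 'I_q) : 'I_(q - t) := Ordinal (@c1_lt t q i H).

Lemma fib1 t q (H : t < q) (j : 'I_(q - t)) :
  #|[set i | @phi1 t q H i == j]| <= 1 + t * (j == 0 :> nat).
Proof.
have [h|h] := eqVneq (j : nat) 0.
  rewrite muln1; apply: leq_trans (@card_interval _ _ 0 t.+1 _) _ => [i|]; last by rewrite subn0 add1n.
  rewrite inE => /eqP E; have : i - t = j by rewrite -E.
  rewrite h; lia.
rewrite muln0; apply: leq_trans (@card_interval _ _ (j + t) (j + t).+1 _) _ => [i|]; last by rewrite subSnn.
rewrite inE => /eqP E; have : i - t = j by rewrite -E.
move: h; lia.
Qed.

Lemma c2_lt d q (i : 'I_q) : 0 < d -> d %| q -> i %/ d < q %/ d.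
Proof. by move=> d0 dq; rewrite ltn_divLR // divnK. Qed.
Definition phi2 d q (d0 : 0 < d) (dq : d %| q) (i : 'I_q) : 'I_(q %/ d) := Ordinal (@c2_lt d q i d0 dq).

Lemma fib2 d q (d0 : 0 < d) (dq : d %| q) (j : 'I_(q %/ d)) :
  #|[set i | @phi2 d q d0 dq i == j]| <= d + 0 * (j == 0 :> nat).
Proof.
rewrite mul0n addn0; apply: leq_trans (@card_interval _ _ (j * d) (j * d + d) _) _ => [i|]; last by rewrite addKn.
rewrite inE => /eqP E; have : i %/ d = j by rewrite -E.
move=> E'; have := divn_eq i d; have := ltn_pmod i d0; rewrite E'; lia.
Qed.

Lemma c3_lt k q p (i : 'I_q) : 0 < p -> minn (i %/ k) p.-1 < p.
Proof. lia. Qed.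
Definition phi3 k q p (p0 : 0 < p) (i : 'I_q) : 'I_p := Ordinal (@c3_lt k q p i p0).

Lemma fib3 k q p (p0 : 0 < p) (j : 'I_p) : 0 < k -> p * k <= q ->
  #|[set i | @phi3 k q p p0 i == j]| <= k + (q - p * k) * (j == p.-1 :> nat).
Proof.
move=> k0 pk.
have [h|h] := eqVneq (j : nat) p.-1.
  rewrite muln1.
  apply: leq_trans (@card_interval _ _ (p.-1 * k) q _) _ => [i|].
    rewrite inE => /eqP E; have : minn (i %/ k) p.-1 = j by rewrite -E.
    rewrite h => E'.
    have := divn_eq i k; have := ltn_pmod i k0; have := ltn_ord i.
    have : p.-1 <= i %/ k by lia.
    move=> L; have := leq_mul L (leqnn k); lia.
  move: pk; case: (p) p0 => // P _ /=; rewrite mulSn; lia.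
rewrite muln0 addn0.
apply: leq_trans (@card_interval _ _ (j * k) (j * k + k) _) _ => [i|]; last by rewrite addKn.
rewrite inE => /eqP E; have : minn (i %/ k) p.-1 = j by rewrite -E.
have := ltn_ord j; move: h => h jp E'.
have E2 : i %/ k = j by lia.
have := divn_eq i k; have := ltn_pmod i k0; rewrite E2; lia.
Qed.

Theorem lemma3p8 (q r N : nat) :
  r < q -> 1 <= r -> 1 <= N ->
  [/\ (forall t, t < r -> f (q - t) (r - t) N <= f q r N /\
                           g (q - t) (r - t) N <= g q r N),
      (forall d, 0 < d -> d %| gcdn q r ->
         f (q %/ d) (r %/ d) N <= f q r N /\ g (q %/ d) (r %/ d) N <= g q r N)
    & (2 <= q %/ (q - r) ->
         f (q %/ (q - r)) (q %/ (q - r)).-1 N <= f q r N /\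
         g (q %/ (q - r)) (q %/ (q - r)).-1 N <= g q r N)].
Proof.
move=> rq r1 N1; split.
- move=> t tr; have H : t < q by lia.
  have Hp : forall S : {set 'I_(q - t)}, #|S| <= r - t -> #|@phi1 t q H @^-1: S| <= r.
    have Hr : (r - t) * 1 + t <= r by lia.
    exact: (@preim_bound _ _ r (r - t) _ _ _ _ (@fib1 t q H) Hr).
  by split; [apply: (@f_red N q (q - t) r (r - t) (@phi1 t q H)) | apply: (@g_red N q (q - t) r (r - t) (@phi1 t q H))].
- move=> d d0 dg.
  have dq : d %| q by apply: dvdn_trans dg (dvdn_gcdl q r).
  have dr : d %| r by apply: dvdn_trans dg (dvdn_gcdr q r).
  have Hp : forall S : {set 'I_(q %/ d)}, #|S| <= r %/ d -> #|@phi2 d q d0 dq @^-1: S| <= r.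
    have Hr : r %/ d * d + 0 <= r by rewrite addn0 divnK.
    exact: (@preim_bound _ _ r (r %/ d) _ _ _ _ (@fib2 d q d0 dq) Hr).
  by split; [apply: (@f_red N q _ r (r %/ d) (@phi2 d q d0 dq)) | apply: (@g_red N q _ r (r %/ d) (@phi2 d q d0 dq))].
- move=> p2.
  have k0 : 0 < q - r by lia.
  have p0 : 0 < q %/ (q - r) by lia.
  have pk : q %/ (q - r) * (q - r) <= q by apply: leq_trunc_div.
  have Hp : forall S : {set 'I_(q %/ (q - r))}, #|S| <= (q %/ (q - r)).-1 ->
     #|@phi3 (q - r) q (q %/ (q - r)) p0 @^-1: S| <= r.
    have Hr : (q %/ (q - r)).-1 * (q - r) + (q - q %/ (q - r) * (q - r)) <= r.
      move: pk p2; case: (q %/ (q - r)) => // P /=; rewrite mulSn; lia.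
    exact: (@preim_bound _ _ r _ _ _ _ _ (fun j => @fib3 (q - r) q (q %/ (q - r)) p0 j k0 pk) Hr).
  by split; [apply: (@f_red N q _ r _ (@phi3 (q - r) q (q %/ (q - r)) p0)) | apply: (@g_red N q _ r _ (@phi3 (q - r) q (q %/ (q - r)) p0))].
Qed.
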